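(* For all $x,y\ge 1$ with $x\ne y$ and all $n\ge\max(x,y)$, the $(x,y)$ edge-removal process on $n$ vertices does not necessarily result in an $(x,y)$ task-dependency graph; that is, with positive probability its result is not an $(x,y)$ task-dependency graph.
   Context: A task-dependency graph is a finite directed acyclic graph (no loops, no multiple edges). A vertex is initial if it has in-degree $0$ and terminal if it has out-degree $0$ (an isolated vertex is both). An $(x,y)$ task-dependency graph has exactly $x$ initial and exactly $y$ terminal vertices. The $(x,y)$ edge-removal process on $n$ vertices: start with the task-dependency graph on $\{1,\dots,n\}$ having all edges $(a,b)$ with $a<b$. Edges are removed uniformly at random, one at a time; a removal that would cause more than $x$ initial vertices or more than $y$ terminal vertices is cancelled. The process terminates when no further edge can be removed. *)

(* Defs.v *)
From HB Require Import structures.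
From mathcomp Require Import all_boot all_order all_algebra.
Set Implicit Arguments. Unset Strict Implicit. Unset Printing Implicit Defensive.
Import Order.TTheory GRing.Theory Num.Theory.

(* A directed graph on the vertex set 'I_n (standing for {1,...,n}) is given
   by its edge set: a finite set of ordered pairs (a,b) meaning a -> b. *)
Definition graph (n : nat) := {set 'I_n * 'I_n}.

Definition edge_rel n (G : graph n) : rel 'I_n := fun a b => (a, b) \in G.

(* Acyclic: no edge (a,b) with b reaching a (this also excludes loops). *)
Definition acyclic n (G : graph n) : bool :=
  [forall a, forall b, ((a, b) \in G) ==> ~~ connect (edge_rel G) b a].

Definition initial_vertices n (G : graph n) : {set 'I_n} :=
  [set v | [forall u, (u, v) \notin G]].
Definition terminal_vertices n (G : graph n) : {set 'I_n} :=
  [set v | [forall w, (v, w) \notin G]].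

Definition is_xy_tdg (x y n : nat) (G : graph n) : bool :=
  [&& acyclic G, #|initial_vertices G| == x & #|terminal_vertices G| == y].

Definition complete_dag (n : nat) : graph n := [set e : 'I_n * 'I_n | (e.1 < e.2)%N].

(* An edge whose removal is not cancelled. *)
Definition removable (x y n : nat) (G : graph n) (e : 'I_n * 'I_n) : bool :=
  [&& e \in G, #|initial_vertices (G :\ e)| <= x
             & #|terminal_vertices (G :\ e)| <= y].

Definition removable_set (x y n : nat) (G : graph n) : {set 'I_n * 'I_n} :=
  [set e | removable x y G e].

(* Probability that the (x,y) edge-removal process started from G ends in a
   graph satisfying P.  Edges are drawn uniformly among remaining edges and
   cancelled draws leave the state unchanged, so each step is a uniformly
   random non-cancelled removal; the process stops when no edge is removable.
   [fuel] bounds the number of steps (each step removes one edge, so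
   fuel = #|G| suffices). *)
Fixpoint end_prob (x y n : nat) (fuel : nat) (P : pred (graph n)) (G : graph n)
    : rat :=
  match fuel with
  | 0 => (P G)%:R
  | f.+1 =>
      let R := removable_set x y G in
      if R == set0 then (P G)%:R
      else (\sum_(e in R) end_prob x y f P (G :\ e)) / (#|R|)%:R
  end%R.

Definition process_prob (x y n : nat) (P : pred (graph n)) : rat :=
  end_prob x y #|complete_dag n| P (complete_dag n).

(* Main.v *)
Require Import Defs.
From mathcomp Require Import all_boot all_order all_algebra zify lra.
Import Order.TTheory GRing.Theory Num.Theory.

Lemma card_pred_ord n (p : pred nat) :
  #|[set v : 'I_n | p (val v)]| = count p (iota 0 n).
Proof.
rewrite -sum1_card -sum1_count.
rewrite (eq_bigl (fun i : 'I_n => p i)); last by move=> i; rewrite inE.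
by rewrite -(big_mkord p (fun _ => 1)) /index_iota subn0.
Qed.

Lemma count_lt k n : count (fun i => i < k) (iota 0 n) = minn k n.
Proof.
elim: n => [|n IH]; first by rewrite minn0.
rewrite -[n.+1]addn1 iotaD count_cat IH /= add0n addn0.
case: ltnP => h; lia.
Qed.

Lemma count_mid k n : count (fun i => 0 < i <= k) (iota 0 n) = minn (k.+1) n - 1.
Proof.
elim: n => [|n IH]; first by rewrite minn0.
rewrite -[n.+1]addn1 iotaD count_cat IH /= add0n addn0.
case: (0 < n <= k) /andP => h; lia.
Qed.

Definition pg n k : graph n :=
  [set e : 'I_n * 'I_n | ((e.2 : nat) == (e.1 : nat).+1) && ((e.2 : nat) <= k)].

Lemma init_pg n k : initial_vertices (pg n k) = [set v : 'I_n | ~~ (0 < (v : nat) <= k)].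
Proof.
apply/setP => v; rewrite !inE; apply/forallP/idP.
- move=> H; apply/negP => /andP[h1 h2].
  have hu : ((v : nat)).-1 < n by have := ltn_ord v; lia.
  have := H (Ordinal hu); by rewrite inE /= (prednK h1) eqxx h2.
- move=> hv u; rewrite inE /=; apply/negP => /andP[/eqP e h].
  move: hv; rewrite e in h *; by rewrite h.
Qed.

Lemma term_pg n k : k < n -> terminal_vertices (pg n k) = [set v : 'I_n | ~~ ((v : nat) < k)].
Proof.
move=> hk; apply/setP => v; rewrite !inE; apply/forallP/idP.
- move=> H; apply/negP => h.
  have hw : ((v : nat)).+1 < n by lia.
  have := H (Ordinal hw); by rewrite inE /= eqxx h.
- move=> hv u; rewrite inE /=; apply/negP => /andP[/eqP e h].
  by rewrite e in h; rewrite h in hv.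
Qed.

Lemma card_init_pg n k : k < n -> #|initial_vertices (pg n k)| = n - k.
Proof.
move=> hk; rewrite init_pg (card_pred_ord n (fun i => ~~ (0 < i <= k))).
have := count_predC (fun i => 0 < i <= k) (iota 0 n).
rewrite size_iota count_mid => h.
have -> : count (fun i => ~~ (0 < i <= k)) (iota 0 n) = count (predC (fun i => 0 < i <= k)) (iota 0 n) by [].
lia.
Qed.

Lemma card_term_pg n k : k < n -> #|terminal_vertices (pg n k)| = n - k.
Proof.
move=> hk; rewrite term_pg // (card_pred_ord n (fun i => ~~ (i < k))).
have := count_predC (fun i => i < k) (iota 0 n).
rewrite size_iota count_lt => h.
have -> : count (fun i => ~~ (i < k)) (iota 0 n) = count (predC (fun i => i < k)) (iota 0 n) by [].
lia.
Qed.

Lemma init_sub n (P H : graph n) : P \subset H ->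
  initial_vertices H \subset initial_vertices P.
Proof.
move/subsetP=> sPH; apply/subsetP => v; rewrite !inE => /forallP h.
apply/forallP => u; apply/negP => /sPH hu; by have := h u; rewrite hu.
Qed.

Lemma term_sub n (P H : graph n) : P \subset H ->
  terminal_vertices H \subset terminal_vertices P.
Proof.
move/subsetP=> sPH; apply/subsetP => v; rewrite !inE => /forallP h.
apply/forallP => u; apply/negP => /sPH hu; by have := h u; rewrite hu.
Qed.

Lemma init_rem_pg n k (e : 'I_n * 'I_n) : e \in pg n k ->
  #|initial_vertices (pg n k)| < #|initial_vertices (pg n k :\ e)|.
Proof.
move=> he.
have h1 : e.2 \notin initial_vertices (pg n k).
  rewrite inE; apply/negP => /forallP h; by have := h e.1; rewrite -surjective_pairing he.
have h2 : e.2 |: initial_vertices (pg n k) \subset initial_vertices (pg n k :\ e).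
  apply/subsetP => v; rewrite !inE => /orP[/eqP ->|/forallP h].
  - apply/forallP => u; rewrite in_setD1 negb_and negbK; apply/orP.
    case: (boolP ((u, e.2) \in pg n k)) => hu; last by right.
    left; move: hu he; rewrite !inE /= => /andP[/eqP a _] /andP[/eqP b _].
    apply/eqP; rewrite [e]surjective_pairing; congr pair; apply/val_inj => /=; lia.
  - by apply/forallP => u; rewrite in_setD1 negb_and; apply/orP; right; exact: h.
have := subset_leq_card h2; by rewrite cardsU1 h1.
Qed.

Lemma term_rem_pg n k (e : 'I_n * 'I_n) : e \in pg n k ->
  #|terminal_vertices (pg n k)| < #|terminal_vertices (pg n k :\ e)|.
Proof.
move=> he.
have h1 : e.1 \notin terminal_vertices (pg n k).
  rewrite inE; apply/negP => /forallP h; by have := h e.2; rewrite -surjective_pairing he.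
have h2 : e.1 |: terminal_vertices (pg n k) \subset terminal_vertices (pg n k :\ e).
  apply/subsetP => v; rewrite !inE => /orP[/eqP ->|/forallP h].
  - apply/forallP => u; rewrite in_setD1 negb_and negbK; apply/orP.
    case: (boolP ((e.1, u) \in pg n k)) => hu; last by right.
    left; move: hu he; rewrite !inE /= => /andP[/eqP a _] /andP[/eqP b _].
    apply/eqP; rewrite [e]surjective_pairing; congr pair; apply/val_inj => /=; lia.
  - by apply/forallP => u; rewrite in_setD1 negb_and; apply/orP; right; exact: h.
have := subset_leq_card h2; by rewrite cardsU1 h1.
Qed.

Lemma end_prob_ge0 x y n f (P : pred (graph n)) G : (0 <= end_prob x y f P G)%R.
Proof.
elim: f G => [|f IH] G /=; first exact: ler0n.
case: ifP => _; first exact: ler0n.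
apply: divr_ge0; last exact: ler0n.
by apply: sumr_ge0 => e _.
Qed.

Lemma key x y n (Pg : graph n) (pr : pred (graph n)) :
  (forall H : graph n, Pg \subset H -> forall e, e \in H -> e \notin Pg -> removable x y H e) ->
  removable_set x y Pg = set0 -> pr Pg ->
  forall f (H : graph n), Pg \subset H -> #|H :\: Pg| <= f -> (0 < end_prob x y f pr H)%R.
Proof.
move=> hrem hR hP; elim=> [|f IH] H sub hc.
- have hs : H \subset Pg by rewrite -setD_eq0 -cards_eq0; lia.
  have -> : H = Pg by apply/eqP; rewrite eqEsubset hs sub.
  by rewrite /= hP ltr01.
- case: (boolP (H \subset Pg)) => hs.
  + have -> : H = Pg by apply/eqP; rewrite eqEsubset hs sub.
    by rewrite /= hR eqxx hP ltr01.
  + case/subsetPn: hs => e eH eP.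
    have eR : e \in removable_set x y H by rewrite inE hrem.
    rewrite /=; have -> : (removable_set x y H == set0) = false.
      by apply/negbTE/set0Pn; exists e.
    apply: divr_gt0; last by rewrite ltr0n card_gt0; apply/set0Pn; exists e.
    rewrite (bigD1 e) //=.
    have h1 : (0 < end_prob x y f pr (H :\ e))%R.
      apply: IH.
      - apply/subsetP => z zP; rewrite in_setD1 (subsetP sub _ zP) andbT.
        by apply/eqP => ze; move: eP; rewrite -ze zP.
      - have -> : (H :\ e) :\: Pg = (H :\: Pg) :\ e by rewrite setDDl setDDl setUC.
        have : e \in H :\: Pg by rewrite inE eP eH.
        move=> hin; have := cardsD1 e (H :\: Pg); rewrite hin; lia.
    have h2 : (0 <= \sum_(i in removable_set x y H | i != e) end_prob x y f pr (H :\ i))%R.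
      by apply: sumr_ge0 => i _; exact: end_prob_ge0.
    lra.
Qed.

Theorem mainTheorem5 (x y n : nat) :
  (1 <= x)%N -> (1 <= y)%N -> x <> y -> (maxn x y <= n)%N ->
  (0 < process_prob x y (fun G : graph n => ~~ is_xy_tdg x y G))%R.
Proof.
move=> hx hy hxy hn.
set m := minn x y; set k := n - m.
have hk : k < n by rewrite /k /m; lia.
have ci := card_init_pg _ _ hk; have ct := card_term_pg _ _ hk.
have hnk : n - k = m by rewrite /k /m; lia.
rewrite hnk in ci ct.
apply: (key _ _ _ (pg n k)).
- move=> H sub e eH eP; rewrite /removable eH /=.
  have sub' : pg n k \subset H :\ e.
    apply/subsetP => z zP; rewrite in_setD1 (subsetP sub _ zP) andbT.
    by apply/eqP => ze; move: eP; rewrite -ze zP.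
  have := subset_leq_card (init_sub _ _ _ sub'); have := subset_leq_card (term_sub _ _ _ sub').
  rewrite ci ct /m => a b; apply/andP; split; [exact: leq_trans b (geq_minl _ _) | exact: leq_trans a (geq_minr _ _)].
- apply/setP => e; rewrite !inE /removable.
  case: (boolP (e \in pg n k)) => he //=.
  have := init_rem_pg _ _ _ he; have := term_rem_pg _ _ _ he; rewrite /m => a b; apply/negbTE/negP => /andP[c d]; move: (leq_trans b c) (leq_trans a d); lia.
- rewrite /is_xy_tdg; apply/negP => /and3P[_ /eqP a /eqP b].
  have a' : #|initial_vertices (pg n k)| = x := a.
  have b' : #|terminal_vertices (pg n k)| = y := b.
  move: ci ct; rewrite a' b' /m; lia.
- apply/subsetP => e; rewrite !inE => /andP[/eqP a _]; lia.
- apply: subset_leq_card; exact: subsetDl.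
Qed.
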